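(* Let $t\in\mathbb{N}$ and let $H$ be a graph whose vertex set is the union of pairwise disjoint sets $A$, $B$, $C$ such that: (1) $A$ and $B$ are independent sets, each of size $3t^2+t$; (2) $A$ and $B$ are complete to each other; (3) $|C|\ge 2$ and $H[C]$ is a path with endpoints $x$ and $y$; (4) both $x$ and $y$ have neighbours in $A\cup B$, and $C\setminus\{x,y\}$ is anticomplete to $A\cup B$; (5) $\deg_H(x)=2$; (6) $N(x)\cap(A\cup B)\neq N(y)\cap(A\cup B)$. Then $H\xrightarrow{\cap} tS_{t,t,t}$.
   Context: All graphs are finite and simple. For graphs $G_1=(V_1,E_1)$, $G_2=(V_2,E_2)$, $G_1\cap G_2=(V_1\cap V_2, E_1\cap E_2)$. For a graph $G=(V,E)$ and an injective map $\alpha$ on $V$, $G^{\alpha}$ has vertex set $\alpha(V)$ and edge set $\{\{\alpha(v),\alpha(w)\}: \{v,w\}\in E\}$. We write $G\xrightarrow{\cap} H$ if $H$ is (isomorphic to) $G^{\alpha_1}\cap\cdots\cap G^{\alpha_k}$ for some $k\ge1$ and injective maps $\alpha_1,\dots,\alpha_k$ on $V(G)$. For integers $a,b,c\ge1$, $S_{a,b,c}$ is the tree consisting of a vertex of degree $3$ together with three pendant paths having $a$, $b$, $c$ edges respectively; $tS_{t,t,t}$ is the disjoint union of $t$ copies of $S_{t,t,t}$. Sets are complete (anticomplete) to each other if all (no) edges between them are present. *)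

(* Defs.v *)
From mathcomp Require Import all_boot.
Set Implicit Arguments. Unset Strict Implicit. Unset Printing Implicit Defensive.

Definition simple_graph (V : finType) (h : rel V) : Prop :=
  (forall u v, h u v = h v u) /\ (forall v, ~~ h v v).

Definition cap_vertices (V U : finType) (k : nat) (alpha : 'I_k -> V -> U) : {set U} :=
  [set u | [forall i, u \in codom (alpha i)]].

Definition cap_edge (V U : finType) (h : rel V) (k : nat) (alpha : 'I_k -> V -> U) : rel U :=
  fun u w => [forall i, [exists v, [exists v', [&& alpha i v == u, alpha i v' == w & h v v']]]].

(* Vertices of t S_{t,t,t}: copy index c : 'I_t, and either the centre (None)
   or the vertex Some (j, p) at distance p+1 from the centre on leg j. *)
Definition tS_vertex (t : nat) : finType := ('I_t * option ('I_3 * 'I_t))%type.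

Definition tS_edge (t : nat) : rel (tS_vertex t) :=
  fun a b =>
    (a.1 == b.1) &&
    match a.2, b.2 with
    | None, Some (_, p) => val p == 0
    | Some (_, p), None => val p == 0
    | Some (j, p), Some (j', p') =>
        (j == j') && (((val p).+1 == val p') || ((val p').+1 == val p))
    | None, None => false
    end.

(* G -cap-> H0, where H0 is the graph (T, e): H0 is isomorphic to the
   intersection of k >= 1 injective images of G. *)
Definition cap_arrow (V : finType) (h : rel V) (T : finType) (e : rel T) : Prop :=
  exists (U : finType) (k : nat) (alpha : 'I_k -> V -> U),
    0 < k /\ (forall i, injective (alpha i)) /\
    exists f : T -> U,
      injective f /\
      (forall u, (u \in cap_vertices alpha) = (u \in codom f)) /\
      (forall a b, e a b = cap_edge h alpha (f a) (f b)).

Definition induced_path (V : finType) (h : rel V) (C : {set V}) (x y : V) : Prop :=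
  exists s : seq V,
    [/\ uniq s, (forall v, (v \in s) = (v \in C)),
        head y s = x, last x s = y &
        forall i j, i < size s -> j < size s ->
          h (nth x s i) (nth x s j) = (i.+1 == j) || (j.+1 == i)].

(* Main.v *)
Require Import Defs.
From mathcomp Require Import all_boot zify.
Set Implicit Arguments. Unset Strict Implicit. Unset Printing Implicit Defensive.

Section Reduce.
Variables (V T I : finType) (h : rel V) (e : rel T) (g : I -> T -> V) (i0 : I).
Hypothesis ginj : forall i, injective (g i).
Hypothesis gE : forall a b, e a b = [forall i, h (g i a) (g i b)].

Let J : finType := (bool * I)%type.
Local Notation U := (T + (J * V))%type.
Definition beta (j : J) (v : V) : U :=
  match [pick a | g j.2 a == v] with Some a => inl a | None => inr (j, v) end.

Lemma beta_g j a : beta j (g j.2 a) = inl a.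
Proof.
rewrite /beta; case: pickP => [a' /eqP Ha|H].
  by rewrite (ginj Ha).
by have := H a; rewrite eqxx.
Qed.

Lemma beta_inl j v a : beta j v = inl a -> v = g j.2 a.
Proof.
rewrite /beta; case: pickP => [a' /eqP Ha|H] //.
by case=> <-.
Qed.

Lemma beta_inr j v j' v' : beta j v = inr (j', v') -> j' = j.
Proof. by rewrite /beta; case: pickP => [a' _|_] //; case. Qed.

Lemma beta_inj j : injective (beta j).
Proof.
move=> v v'; rewrite /beta.
case: pickP => [a /eqP Ha|Ha]; case: pickP => [a' /eqP Ha'|Ha'] //.
- by case=> E; rewrite -Ha -Ha' E.
- by case.
Qed.

Let idx (ii : 'I_#|J|) : J := nth (true, i0) (enum J) ii.

Lemma idx_surj j : exists ii, idx ii = j.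
Proof.
have Hl : index j (enum J) < #|J| by rewrite cardE index_mem mem_enum.
by exists (Ordinal Hl); rewrite /idx /= nth_index // mem_enum.
Qed.

Lemma reduce_cap : cap_arrow h e.
Proof.
exists U, #|J|, (fun ii => beta (idx ii)).
split.
  have [ii _] := idx_surj (true, i0).
  by apply: leq_ltn_trans (ltn_ord ii).
split; first by move=> ii; apply: beta_inj.
exists inl; split; first by move=> a b [].
split.
  move=> [a|[j v]].
    have -> : inl a \in codom (@inl T (J * V)) by apply/codomP; exists a.
    rewrite inE; apply/forallP => ii; apply/codomP.
    by exists (g (idx ii).2 a); rewrite beta_g.
  have -> : (inr (j, v) \in codom (@inl T (J * V))) = false by apply/negP => /codomP [w].
  apply/negP; rewrite inE => /forallP H.
  have [ii Hii] := idx_surj (~~ j.1, j.2).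
  have /codomP [w Hw] := H ii.
  move: (esym Hw); case E: (beta _ w) => [a'|[j' v']] //.
  case=> Ej _; have := beta_inr E; rewrite Hii Ej.
  by case: j {Hw H E Ej Hii} => [[] ?].
move=> a b; rewrite gE /cap_edge.
apply/idP/idP.
  move/forallP => H; apply/forallP => ii; apply/existsP; exists (g (idx ii).2 a).
  apply/existsP; exists (g (idx ii).2 b); rewrite !beta_g !eqxx /=.
  exact: H.
move/forallP => H; apply/forallP => i.
have [ii Hii] := idx_surj (true, i).
have /existsP [v /existsP [v' /and3P [/eqP Hv /eqP Hv' Hh]]] := H ii.
by rewrite (beta_inl Hv) (beta_inl Hv') Hii in Hh.
Qed.
End Reduce.

Section Mkg.
Variables (T V : finType) (sp : T -> option V) (col : T -> bool) (XA XB : {set V}) (v0 : V).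
Definition PA := [set b | (sp b == None) && col b].
Definition PB := [set b | (sp b == None) && ~~ col b].
Definition mkg (a : T) : V :=
  match sp a with
  | Some v => v
  | None => nth v0 (enum (if col a then XA else XB)) (index a (enum (if col a then PA else PB)))
  end.

Hypothesis Hsp : forall a b v, sp a = Some v -> sp b = Some v -> a = b.
Hypothesis Hout : forall a v, sp a = Some v -> (v \notin XA) && (v \notin XB).
Hypothesis Hdisj : [disjoint XA & XB].
Hypothesis HcA : #|PA| <= #|XA|.
Hypothesis HcB : #|PB| <= #|XB|.

Lemma mkg_sp a v : sp a = Some v -> mkg a = v.
Proof. by rewrite /mkg => ->. Qed.

Lemma mkg_in_aux a : sp a = None ->
  a \in (if col a then PA else PB) /\
  index a (enum (if col a then PA else PB)) < #|if col a then XA else XB|.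
Proof.
move=> Ha.
have Hm : a \in (if col a then PA else PB).
  by case E: (col a); rewrite !inE Ha E.
split=> //.
apply: (@leq_trans #|if col a then PA else PB|).
  by rewrite cardE index_mem mem_enum.
by case: (col a).
Qed.

Lemma mkg_none a : sp a = None -> mkg a \in (if col a then XA else XB).
Proof.
move=> Ha; rewrite /mkg Ha.
have [_ Hl] := mkg_in_aux Ha.
by rewrite -mem_enum; apply: mem_nth; rewrite -cardE.
Qed.

Lemma mkg_inj : injective mkg.
Proof.
move=> a b.
case Ea: (sp a) => [va|]; case Eb: (sp b) => [vb|].
- by rewrite (mkg_sp Ea) (mkg_sp Eb) => E; subst; apply: Hsp Ea Eb.
- rewrite (mkg_sp Ea) => E; have := mkg_none Eb; rewrite -E.
  by have /andP [H1 H2] := Hout Ea; case: (col b); rewrite ?(negbTE H1) ?(negbTE H2).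
- rewrite (mkg_sp Eb) => E; have := mkg_none Ea; rewrite E.
  by have /andP [H1 H2] := Hout Eb; case: (col a); rewrite ?(negbTE H1) ?(negbTE H2).
move=> E.
have HA := mkg_none Ea; have HB := mkg_none Eb.
have Hc : col a = col b.
  apply/eqP; apply: contraTT isT => Hne.
  move: HA HB; rewrite -E; case: (col a) Hne; case: (col b) => //= _ H1 H2.
    by first [rewrite (disjointFr Hdisj H1) in H2 | rewrite (disjointFr Hdisj H2) in H1].
  by first [rewrite (disjointFr Hdisj H1) in H2 | rewrite (disjointFr Hdisj H2) in H1].
have [Ma La] := mkg_in_aux Ea; have [Mb Lb] := mkg_in_aux Eb.
move: E; rewrite /mkg Ea Eb -Hc => E.
move: La Lb Ma Mb; rewrite -Hc => La Lb Ma Mb.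
have Ei : index a (enum (if col a then PA else PB)) = index b (enum (if col a then PA else PB)).
  apply/eqP; rewrite -(@nth_uniq _ v0 (enum (if col a then XA else XB))) -?cardE //.
    by rewrite E.
  exact: enum_uniq.
have Ma' : a \in enum (if col a then PA else PB) by rewrite mem_enum.
rewrite -(nth_index a Ma').
by rewrite Ei nth_index // mem_enum.
Qed.
End Mkg.

Section TS.
Variable t : nat.
Local Notation T := (tS_vertex t).

Lemma tS_sym (a b : T) : tS_edge a b = tS_edge b a.
Proof.
case: a b => [sa [[ja pa]|]] [sb [[jb pb]|]]; rewrite /tS_edge /= ?(eq_sym sa) //.
by rewrite (eq_sym ja) orbC.
Qed.

Definition dpar (o : option ('I_3 * 'I_t)) : bool :=
  if o is Some (_, q) then ~~ odd q else false.

Lemma dpar_edge (a b : T) : tS_edge a b -> dpar a.2 != dpar b.2.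
Proof.
case: a b => [sa [[ja pa]|]] [sb [[jb pb]|]]; rewrite /tS_edge /=.
- move=> /and3P [_ _ /orP [/eqP <-|/eqP <-]] /=; by [case: (odd pa)|case: (odd pb)].
- by move/andP => [_ /eqP ->].
- by move/andP => [_ /eqP ->].
- by rewrite andbF.
Qed.

Variables (sI : 'I_t) (j : 'I_3).

Definition legpos (a : T) : option nat :=
  if a.1 == sI then (if a.2 is Some (j', q) then (if j' == j then Some (nat_of_ord q) else None) else None)
  else None.

Lemma legposP a q : legpos a = Some q -> exists q' : 'I_t, a = (sI, Some (j, q')) /\ nat_of_ord q' = q.
Proof.
case: a => [sa [[ja pa]|]]; rewrite /legpos /=; case: eqP => // ->.
by case: eqP => // -> [<-]; exists pa.
Qed.

Lemma legpos_eq (q : 'I_t) : legpos (sI, Some (j, q)) = Some (nat_of_ord q).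
Proof. by rewrite /legpos /= !eqxx. Qed.

Lemma legpos_centre : legpos (sI, None) = None.
Proof. by rewrite /legpos /= eqxx. Qed.

Lemma nbr a b q : tS_edge a b -> legpos a = Some q ->
  legpos b = Some q.+1 \/ (legpos b = Some q.-1 /\ 0 < q) \/ (q = 0 /\ b = (sI, None)).
Proof.
move=> He /legposP [q' [Ea Eq]]; subst.
case: b He => [sb [[jb pb]|]]; rewrite /tS_edge /=.
  move=> /and3P [/eqP <- /eqP <-]; rewrite legpos_eq.
  move=> /orP [/eqP E|/eqP E]; [by left; rewrite E|right; left].
  by rewrite -E.
by move/andP => [/eqP <- /eqP ->]; right; right.
Qed.

End TS.

Section Copy.
Variables (t : nat) (V : finType) (h : rel V) (A B : {set V}) (ps : seq V) (x y a0 b0 : V).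
Local Notation T := (tS_vertex t).
Local Notation c k := (nth x ps k).
Local Notation m := (size ps).-1.
Hypothesis hsym : forall u v, h u v = h v u.
Hypothesis dAB : [disjoint A & B].
Hypothesis indB : forall b b', b \in B -> b' \in B -> ~~ h b b'.
Hypothesis hAB : forall a b, a \in A -> b \in B -> h a b.
Hypothesis cardA : #|A| = #|T|.
Hypothesis cardB : #|B| = #|T|.
Hypothesis ps2 : 1 < size ps.
Hypothesis psU : uniq ps.
Hypothesis c0 : c 0 = x.
Hypothesis cm : c m = y.
Hypothesis cadj : forall i k, i < size ps -> k < size ps -> h (c i) (c k) = (i.+1 == k) || (k.+1 == i).
Hypothesis cAB : forall k, k < size ps -> (c k \notin A) && (c k \notin B).
Hypothesis a0AB : a0 \in A :|: B.
Hypothesis b0AB : b0 \in A :|: B.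
Hypothesis xa0 : h x a0.
Hypothesis yb0 : h y b0.
Hypothesis ab0 : a0 != b0.
Hypothesis Nx : forall v, h x v -> v = a0 \/ v = c 1.

Lemma c_inj i k : i < size ps -> k < size ps -> c i = c k -> i = k.
Proof. by move=> Hi Hk /eqP; rewrite nth_uniq // => /eqP. Qed.

Lemma hAB' u v : u \in A -> v \in B -> h v u.
Proof. by move=> *; rewrite hsym hAB. Qed.

Lemma side_h u v bu bv : u \in (if bu then A else B) -> v \in (if bv then A else B) ->
  bu != bv -> h u v.
Proof. by case: bu; case: bv => // Hu Hv _; [apply: hAB|apply: hAB']. Qed.

Section P.
Variables (sI : 'I_t) (j : 'I_3) (p : 'I_t).
Local Notation lp := (legpos sI j).

Definition isPred (a : T) := if (p : nat) == 0 then a == (sI, None) else lp a == Some ((p : nat)).-1.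
Definition isSucc (a : T) := lp a == Some ((p : nat) + m).+1.
Definition chainIdx (a : T) : option nat :=
  if lp a is Some q then (if ((p : nat) <= q) && (q <= (p : nat) + m) then Some (q - (p : nat)) else None) else None.
Definition isTail (a : T) := if lp a is Some q then (p : nat) + m < q else false.
Definition spP (a : T) : option V :=
  if chainIdx a is Some k then Some (c k) else if isPred a then Some a0
  else if isSucc a then Some b0 else None.
Definition dP := if (p : nat) == 0 then false else ~~ odd ((p : nat)).-1.
Definition dS := ~~ odd ((p : nat) + m).+1.
Definition colP (a : T) := if isTail a then (b0 \in A) (+) dpar a.2 (+) dS
                           else (a0 \in A) (+) dpar a.2 (+) dP.
Definition XA := A :\: [set a0; b0].
Definition XB := B :\: [set a0; b0].
Definition gP := mkg spP colP XA XB x.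

Lemma chainP a k : chainIdx a = Some k -> lp a = Some ((p : nat) + k) /\ k <= m.
Proof.
rewrite /chainIdx; case: (lp a) => // q; case: ifP => // /andP [H1 H2] [<-].
split; [congr Some|]; lia.
Qed.

Lemma chainN a q : chainIdx a = None -> lp a = Some q -> q < (p : nat) \/ (p : nat) + m < q.
Proof. rewrite /chainIdx => + E; rewrite E; case: ifP => // /negbT; lia. Qed.

Lemma pred_lp a : isPred a -> ((p : nat) == 0) && (a == (sI, None)) || (0 < (p : nat)) && (lp a == Some ((p : nat)).-1).
Proof. rewrite /isPred; case: eqP => /= [-> ->|]; first by []. by move=> H ->; rewrite andbT; lia. Qed.

Lemma pred_nochain a : isPred a -> chainIdx a = None.
Proof.
move=> /pred_lp /orP [/andP [_ /eqP ->]|/andP [H /eqP E]].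
  by rewrite /chainIdx legpos_centre.
by rewrite /chainIdx E; case: ifP => //; lia.
Qed.

Lemma succ_nochain a : isSucc a -> chainIdx a = None.
Proof. by rewrite /isSucc /chainIdx => /eqP ->; case: ifP => //; lia. Qed.

Lemma pred_succ a : isPred a -> isSucc a -> False.
Proof.
rewrite /isSucc => /pred_lp /orP [/andP [_ /eqP ->]|/andP [H /eqP ->]].
  by rewrite legpos_centre.
by move/eqP => [] ; lia.
Qed.

Lemma lp_inj a b q : lp a = Some q -> lp b = Some q -> a = b.
Proof.
move=> Ea Eb.
have [qa [-> Eqa]] := legposP Ea; have [qb [-> Eqb]] := legposP Eb.
by congr (_, Some (_, _)); apply: val_inj; rewrite /= Eqa Eqb.
Qed.

Lemma pred_uniq a b : isPred a -> isPred b -> a = b.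
Proof.
rewrite /isPred; case: eqP => _; first by move=> /eqP -> /eqP ->.
by move=> /eqP Ea /eqP Eb; apply: lp_inj Ea Eb.
Qed.

Lemma succ_uniq a b : isSucc a -> isSucc b -> a = b.
Proof. by rewrite /isSucc => /eqP Ea /eqP Eb; apply: lp_inj Ea Eb. Qed.

Lemma sp_inj a b v : spP a = Some v -> spP b = Some v -> a = b.
Proof.
rewrite /spP.
case Ca: (chainIdx a) => [ka|]; case Cb: (chainIdx b) => [kb|].
- move=> [<-] [E]; have [La Ka] := chainP Ca; have [Lb Kb] := chainP Cb.
  have Ek : ka = kb by apply: c_inj => //; lia.
  by subst; apply: lp_inj La Lb.
- have [_ Ka] := chainP Ca; have /andP [H1 H2] : (c ka \notin A) && (c ka \notin B) by apply: cAB; lia.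
  move=> [<-]; case: ifP => _; first case=> E.
    by move: a0AB; rewrite inE E (negbTE H1) (negbTE H2).
  case: ifP => // _ [E].
  by move: b0AB; rewrite inE E (negbTE H1) (negbTE H2).
- have [_ Kb] := chainP Cb; have /andP [H1 H2] : (c kb \notin A) && (c kb \notin B) by apply: cAB; lia.
  move=> Ha [Ev]; rewrite -Ev in Ha; move: Ha; case: ifP => _; first case=> E.
    by move: a0AB; rewrite inE E (negbTE H1) (negbTE H2).
  case: ifP => // _ [E].
  by move: b0AB; rewrite inE E (negbTE H1) (negbTE H2).
- case Pa: (isPred a); case Pb: (isPred b).
  + by move=> _ _; apply: pred_uniq.
  + move=> [<-]; case: (isSucc b) => // -[E]; by move: ab0; rewrite E eqxx.
  + case: (isSucc a) => // -[<-] [E]; by move: ab0; rewrite E eqxx.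
  + case Sa: (isSucc a); case Sb: (isSucc b) => // _ _; exact: succ_uniq.
Qed.

Lemma sp_out a v : spP a = Some v -> (v \notin XA) && (v \notin XB).
Proof.
rewrite /spP /XA /XB; case Ca: (chainIdx a) => [ka|].
  move=> [<-]; have [_ Ka] := chainP Ca; have /andP [H1 H2] : (c ka \notin A) && (c ka \notin B) by apply: cAB; lia.
  by rewrite !inE (negbTE H1) (negbTE H2) !andbF.
case: ifP => _; first by case=> <-; rewrite !inE eqxx.
by case: ifP => // _ [<-]; rewrite !inE eqxx orbT.
Qed.

Lemma XdisjP : [disjoint XA & XB].
Proof.
rewrite /XA /XB; apply/pred0P => v /=; rewrite !inE.
case vA: (v \in A); case vB: (v \in B); rewrite ?andbF //=.
by rewrite (disjointFr dAB vA) in vB.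
Qed.

Definition uP : T := (sI, Some (j, p)).
Definition wP : T := if (p : nat) == 0 then (sI, None)
  else (sI, Some (j, Ordinal (leq_ltn_trans (leq_pred p) (ltn_ord p)))).

Lemma uP_sp : exists v, spP uP = Some v.
Proof.
exists (c 0); rewrite /spP /chainIdx /uP legpos_eq leqnn leq_addr /= subnn //.
Qed.

Lemma wP_sp : exists v, spP wP = Some v.
Proof.
rewrite /spP; case: (chainIdx wP) => [k|]; first by exists (c k).
suff -> : isPred wP by exists a0.
rewrite /isPred /wP; case: eqP => // _; by rewrite legpos_eq.
Qed.

Lemma uw : uP != wP.
Proof.
rewrite /uP /wP; case: ifP => Hp; apply/eqP; first by case.
move=> E; have := congr1 (fun a : T => if a.2 is Some (_, q) then val q else 0) E => /=; lia.
Qed.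

Lemma XA_card : #|T| - 2 <= #|XA|.
Proof.
rewrite /XA cardsD cardA.
have : #|A :&: [set a0; b0]| <= 2.
  by apply: leq_trans (subset_leq_card (subsetIr _ _)) _; rewrite cards2; case: (_ != _).
lia.
Qed.

Lemma XB_card : #|T| - 2 <= #|XB|.
Proof.
rewrite /XB cardsD cardB.
have : #|B :&: [set a0; b0]| <= 2.
  by apply: leq_trans (subset_leq_card (subsetIr _ _)) _; rewrite cards2; case: (_ != _).
lia.
Qed.

Lemma none_card (P : {set T}) : (forall a, a \in P -> spP a = None) -> #|P| <= #|T| - 2.
Proof.
move=> HP.
have : P \subset ~: [set uP; wP].
  apply/subsetP => a Ha; rewrite !inE; have := HP a Ha.
  have [v Hu] := uP_sp; have [v' Hw] := wP_sp.
  by case: eqP => [->|_]; [rewrite Hu|case: eqP => [->|_]; [rewrite Hw|]].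
move/subset_leq_card => H; have := cardsC [set uP; wP]; rewrite cards2 uw; lia.
Qed.


Lemma HcAP : #|PA spP colP| <= #|XA|.
Proof. apply: leq_trans (XA_card); apply: none_card => a; rewrite inE => /andP [/eqP -> _] //. Qed.
Lemma HcBP : #|PB spP colP| <= #|XB|.
Proof. apply: leq_trans (XB_card); apply: none_card => a; rewrite inE => /andP [/eqP -> _] //. Qed.

Lemma gP_inj : injective gP.
Proof. exact: (mkg_inj sp_inj sp_out XdisjP HcAP HcBP). Qed.

Lemma gP_none a : spP a = None -> gP a \in (if colP a then XA else XB).
Proof. exact: (mkg_none x HcAP HcBP). Qed.

Lemma gP_sp a v : spP a = Some v -> gP a = v.
Proof. exact: mkg_sp. Qed.

Lemma pred_col a : isPred a -> colP a = (a0 \in A).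
Proof.
rewrite /colP /isTail /dP => Pa.
case/orP: (pred_lp Pa) => /andP [H1 /eqP E].
  by rewrite E legpos_centre /= H1; case: (a0 \in A).
have [q [-> Eq]] := legposP E; rewrite legpos_eq /= -Eq.
have -> : ((p : nat) + m < q) = false by lia.
have -> : ((p : nat) == 0) = false by lia.
by rewrite addbK.
Qed.

Lemma succ_col a : isSucc a -> colP a = (b0 \in A).
Proof.
rewrite /colP /isTail /dS /isSucc => /eqP E.
have [q [-> Eq]] := legposP E; rewrite legpos_eq /= Eq ltnSn.
by rewrite addbK.
Qed.

Lemma in_side v : v \in A :|: B -> v \in (if v \in A then A else B).
Proof. by rewrite inE; case: ifP => // _. Qed.

Lemma gP_side a : chainIdx a = None -> gP a \in (if colP a then A else B).
Proof.
move=> Ca.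
case Pa: (isPred a).
  rewrite (gP_sp (_ : spP a = Some a0)) ?pred_col //; first exact: in_side.
  by rewrite /spP Ca Pa.
case Sa: (isSucc a).
  rewrite (gP_sp (_ : spP a = Some b0)) ?succ_col //; first exact: in_side.
  by rewrite /spP Ca Pa Sa.
have E : spP a = None by rewrite /spP Ca Pa Sa.
have := gP_none E.
by case: (colP a); rewrite /XA /XB inE => /andP [].
Qed.

Lemma tail_edge a b : tS_edge a b -> chainIdx b = None -> isTail a -> isTail b.
Proof.
rewrite /isTail => He Cb; case E: (lp a) => [q|] // Hq.
have [|[[E' Hq0]|[Hq0 Eb]]] := nbr He E.
- by move=> ->; lia.
- rewrite E'; case: (ltnP ((p : nat) + m) q.-1) => // H.
  have : chainIdx b = Some (q.-1 - p) by rewrite /chainIdx E'; case: ifP => //; lia.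
  by rewrite Cb.
- lia.
Qed.

Lemma col_edge a b : tS_edge a b -> chainIdx a = None -> chainIdx b = None -> colP a != colP b.
Proof.
move=> He Ca Cb.
have Et : isTail a = isTail b.
  apply/idP/idP; [exact: tail_edge|].
  by apply: tail_edge Ca; rewrite tS_sym.
have := dpar_edge He; rewrite /colP Et.
by case: (isTail b); case: (dpar a.2); case: (dpar b.2); case: (_ \in A); case dS; case dP.
Qed.

Lemma chain_nb a b k : tS_edge a b -> chainIdx a = Some k -> chainIdx b = None ->
  (k = 0 /\ isPred b) \/ (k = m /\ isSucc b).
Proof.
move=> He Ca Cb; have [La Km] := chainP Ca.
have [Eb|[[Eb H0]|[H0 Eb]]] := nbr He La.
- have := chainN Cb Eb => H; right; split; first lia.
  by rewrite /isSucc Eb; apply/eqP; congr Some; lia.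
- have := chainN Cb Eb => H; left; split; first lia.
  rewrite /isPred ifF; last lia.
  by rewrite Eb; apply/eqP; congr Some; lia.
- left; split; first lia.
  by rewrite /isPred ifT ?Eb //; lia.
Qed.

Lemma chain_g a k : chainIdx a = Some k -> gP a = c k.
Proof. by move=> Ca; apply: gP_sp; rewrite /spP Ca. Qed.

Lemma pred_g a : chainIdx a = None -> isPred a -> gP a = a0.
Proof. by move=> Ca Pa; apply: gP_sp; rewrite /spP Ca Pa. Qed.

Lemma succ_g a : chainIdx a = None -> isSucc a -> gP a = b0.
Proof.
move=> Ca Sa; apply: gP_sp; rewrite /spP Ca Sa.
by case: ifP => // Pa; case: (pred_succ Pa Sa).
Qed.

Lemma gP_edge_cn a b k : tS_edge a b -> chainIdx a = Some k -> chainIdx b = None ->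
  h (gP a) (gP b).
Proof.
move=> He Ca Cb; rewrite (chain_g Ca).
have [[-> Pb]|[-> Sb]] := chain_nb He Ca Cb.
  by rewrite (pred_g Cb Pb) c0.
by rewrite (succ_g Cb Sb) cm.
Qed.

Lemma gP_edge a b : tS_edge a b -> h (gP a) (gP b).
Proof.
move=> He.
case Ca: (chainIdx a) => [ka|]; case Cb: (chainIdx b) => [kb|].
- rewrite (chain_g Ca) (chain_g Cb).
  have [La Ka] := chainP Ca; have [Lb Kb] := chainP Cb.
  rewrite cadj; try lia.
  have [Eb|[[Eb H0]|[H0 Eb]]] := nbr He La; try rewrite Lb in Eb.
  + case: Eb => Eb; apply/orP; left; apply/eqP; lia.
  + case: Eb => Eb; apply/orP; right; apply/eqP; lia.
  + by rewrite Eb legpos_centre in Lb.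
- exact: gP_edge_cn He Ca Cb.
- rewrite hsym; apply: gP_edge_cn Cb Ca; by rewrite tS_sym.
- apply: side_h (gP_side Ca) (gP_side Cb) _.
  exact: col_edge.
Qed.

Lemma gP_kill b : ~~ tS_edge uP b -> ~~ h (gP uP) (gP b).
Proof.
have Cu : chainIdx uP = Some 0.
  rewrite /chainIdx /uP legpos_eq leqnn leq_addr /= subnn //.
rewrite (chain_g Cu) c0 => Hne; apply/negP => /Nx Hb.
move/negP: Hne; apply.
have c1AB : (c 1 \notin A) && (c 1 \notin B) by apply: cAB.
case Cb: (chainIdx b) => [k|].
  have [Lb Kb] := chainP Cb.
  have := Hb; rewrite (chain_g Cb) => -[E|E].
    have /andP [H1 H2] : (c k \notin A) && (c k \notin B) by apply: cAB; lia.
    by move: a0AB; rewrite inE -E (negbTE H1) (negbTE H2).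
  have Ek : k = 1 by apply: c_inj E; lia.
  subst k; have [q [-> Eq]] := legposP Lb.
  by rewrite /uP /tS_edge /= !eqxx /= Eq addn1 eqxx.
case Pb: (isPred b).
  case/orP: (pred_lp Pb) => /andP [H1 /eqP E].
    by rewrite E /uP /tS_edge /= eqxx /= H1.
  have [q [-> Eq]] := legposP E.
  rewrite /uP /tS_edge /= !eqxx /= Eq; apply/orP; right; apply/eqP; lia.
case Sb: (isSucc b).
  move: Hb; rewrite (succ_g Cb Sb) => -[E|E].
    by move: ab0; rewrite E eqxx.
  by move: b0AB c1AB; rewrite inE E => /orP [] ->; rewrite ?andbF.
have Eb : spP b = None by rewrite /spP Cb Pb Sb.
have := gP_none Eb; rewrite /XA /XB.
case: Hb => ->; case: (colP b); rewrite !inE ?eqxx //=.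
  by case/andP: c1AB => /negbTE ->; rewrite andbF.
by case/andP: c1AB => _ /negbTE ->; rewrite andbF.
Qed.

End P.
Definition gQ := mkg (fun _ : T => None) (fun a : T => dpar a.2) A B x.

Lemma HcAQ : #|PA (fun _ : T => None : option V) (fun a : T => dpar a.2)| <= #|A|.
Proof. by rewrite cardA max_card. Qed.
Lemma HcBQ : #|PB (fun _ : T => None : option V) (fun a : T => dpar a.2)| <= #|B|.
Proof. by rewrite cardB max_card. Qed.

Lemma gQ_inj : injective gQ.
Proof. exact: (mkg_inj (fun _ _ _ (E : None = _) => match E with end) (fun _ _ (E : None = _) => match E with end) dAB HcAQ HcBQ). Qed.

Lemma gQ_none a : gQ a \in (if dpar a.2 then A else B).
Proof. exact: (mkg_none x HcAQ HcBQ). Qed.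

Lemma gQ_edge a b : tS_edge a b -> h (gQ a) (gQ b).
Proof. by move=> He; apply: side_h (gQ_none a) (gQ_none b) (dpar_edge He). Qed.

Definition gF (i : option T) : T -> V :=
  match i with Some (sI, Some (j, p)) => gP sI j p | _ => gQ end.

Lemma gF_inj i : injective (gF i).
Proof. case: i => [[sI [[j p]|]]|] /=; [exact: gP_inj|exact: gQ_inj|exact: gQ_inj]. Qed.

Lemma gF_edge a b : tS_edge a b = [forall i, h (gF i a) (gF i b)].
Proof.
apply/idP/idP.
  move=> He; apply/forallP => -[[sI [[j p]|]]|] /=; [exact: gP_edge|exact: gQ_edge|exact: gQ_edge].
apply: contraTT => Hne; apply/forallPn.
case: a Hne => [sa [[ja pa]|]] Hne.
  by exists (Some (sa, Some (ja, pa))); apply: gP_kill.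
case: b Hne => [sb [[jb pb]|]] Hne.
  exists (Some (sb, Some (jb, pb))); rewrite hsym; apply: gP_kill.
  by rewrite tS_sym.
exists None => /=; apply: indB.
  by have := gQ_none (sa, None).
by have := gQ_none (sb, None).
Qed.

End Copy.
Unset Implicit Arguments.

Theorem mainTheorem4 (t : nat) (V : finType) (h : rel V) (A B C : {set V}) (x y : V) :
  simple_graph h ->
  [disjoint A & B] -> [disjoint A & C] -> [disjoint B & C] ->
  A :|: B :|: C = [set: V] ->
  (* (1) *)
  (forall a a', a \in A -> a' \in A -> ~~ h a a') ->
  (forall b b', b \in B -> b' \in B -> ~~ h b b') ->
  #|A| = 3 * t ^ 2 + t -> #|B| = 3 * t ^ 2 + t ->
  (* (2) *)
  (forall a b, a \in A -> b \in B -> h a b) ->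
  (* (3) *)
  2 <= #|C| -> induced_path h C x y ->
  (* (4) *)
  (exists2 v, v \in A :|: B & h x v) ->
  (exists2 v, v \in A :|: B & h y v) ->
  (forall c v, c \in C :\: [set x; y] -> v \in A :|: B -> ~~ h c v) ->
  (* (5) *)
  #|[set v | h x v]| = 2 ->
  (* (6) *)
  [set v in A :|: B | h x v] != [set v in A :|: B | h y v] ->
  cap_arrow h (@tS_edge t).
Proof.
move=> [hsym _] dAB dAC dBC _ _ indB cA cB hAB HC2 [ps [psU psC hd lst adj]]
  [a0 a0AB xa0] [w wAB yw] _ Hdeg Hneq.
have cT : #|tS_vertex t| = 3 * t ^ 2 + t.
  rewrite card_prod card_option card_prod !card_ord; lia.
have cardA : #|A| = #|tS_vertex t| by rewrite cT.
have cardB : #|B| = #|tS_vertex t| by rewrite cT.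
have ps2 : 2 <= size ps.
  have <- : #|C| = size ps; last by [].
  rewrite -(card_uniqP psU); apply: eq_card => v; by rewrite psC.
have c0 : nth x ps 0 = x by move: hd; case: (ps) => //= z s.
have cm : nth x ps (size ps).-1 = y by rewrite nth_last.
have cAB : forall k, k < size ps -> (nth x ps k \notin A) && (nth x ps k \notin B).
  move=> k Hk; have : nth x ps k \in C by rewrite -psC mem_nth.
  by move=> Hc; rewrite (disjointFl dAC Hc) (disjointFl dBC Hc).
have xc1 : h x (nth x ps 1).
  by have := adj 0 1 (ltnW ps2) ps2; rewrite c0 => ->.
have a0c1 : a0 != nth x ps 1.
  apply/eqP => E; have /andP [H1 H2] := cAB 1 ps2.
  by move: a0AB; rewrite inE E (negbTE H1) (negbTE H2).
have Nx : forall v, h x v -> v = a0 \/ v = nth x ps 1.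
  have ES : [set a0; nth x ps 1] = [set v | h x v].
    apply/eqP; rewrite eqEcard Hdeg cards2 a0c1 leqnn andbT.
    by apply/subsetP => v; rewrite !inE => /orP [] /eqP ->.
  move=> v Hv; have : v \in [set v | h x v] by rewrite inE.
  by rewrite -ES !inE => /orP [] /eqP; [left|right].
have NxAB : forall v, v \in A :|: B -> h x v -> v = a0.
  move=> v HvAB /Nx [//|E]; have /andP [H1 H2] := cAB 1 ps2.
  by move: HvAB; rewrite inE E (negbTE H1) (negbTE H2).
case: (boolP [exists v, [&& v \in A :|: B, h y v & v != a0]]).
  move/existsP => [b0 /and3P [b0AB yb0 Hb0]].
  have ab0 : a0 != b0 by rewrite eq_sym.
  exact: (reduce_cap None (gF_inj dAB cardA cardB ps2 psU cm cAB a0AB b0AB xa0 yb0 ab0)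
    (gF_edge hsym dAB indB hAB cardA cardB ps2 psU c0 cm adj cAB a0AB b0AB xa0 yb0 ab0 Nx)).
move/existsPn => Hno.
have Ny : forall v, v \in A :|: B -> h y v -> v = a0.
  by move=> v H1 H2; have := Hno v; rewrite H1 H2 /= negbK => /eqP.
have ya0 : h y a0 by rewrite -(Ny w wAB yw).
case/negP: Hneq; apply/eqP/setP => v; rewrite !inE.
apply/idP/idP => /andP [H1 H2]; have H1' : v \in A :|: B by rewrite inE.
  by rewrite (NxAB v H1' H2) ya0 -(NxAB v H1' H2) H1.
by rewrite (Ny v H1' H2) xa0 -(Ny v H1' H2) H1.
Qed.
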